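(* Let $n \ge 1$ and let $p_0, p_1, \ldots, p_n \in \mathbb{Z}^2$ be integer points with $p_n = p_0$, forming the closed polygon $P = (p_0, p_1, \ldots, p_n)$ (not necessarily simple). Then $$\mathrm{Area}(P) = \mathrm{Welp}(P), \qquad\text{where } \mathrm{Welp}(P) := \sum_{q \in \mathbb{Z}^2} \mathrm{Dang}(P - q).$$
   Context: Work over an ordered field $\mathbb{K}$ containing $\mathbb{Q}$ (e.g. $\mathbb{Q}$ or $\mathbb{R}$), viewing $\mathbb{Z}^2 \subset \mathbb{K}^2$. For $u = (u_1,u_2), v = (v_1,v_2) \in \mathbb{K}^2$ define $\mathrm{area}(u,v) := \tfrac12 (u_1 - v_1)(u_2 + v_2)$, and for a polygon $P = (p_0, \ldots, p_n)$ define $\mathrm{Area}(P) := \sum_{i=1}^n \mathrm{area}(p_{i-1}, p_i)$. Let $\operatorname{sign} \colon \mathbb{K} \to \{-1,0,1\}$ be the sign function. The discrete angle measure is $$\mathrm{dang}(u,v) := \tfrac14 \,\bigl|\operatorname{sign} u_1 - \operatorname{sign} v_1\bigr| \cdot \operatorname{sign}(u_1 v_2 - u_2 v_1),$$ and for a polygon $P = (p_0,\ldots,p_n)$ we set $\mathrm{Dang}(P) := \sum_{i=1}^n \mathrm{dang}(p_{i-1}, p_i)$. For $q \in \mathbb{K}^2$, $P - q := (p_0 - q, \ldots, p_n - q)$. (Only finitely many $q \in \mathbb{Z}^2$ give $\mathrm{Dang}(P-q) \ne 0$, namely those in a sufficiently large box containing all vertices, so the sum defining $\mathrm{Welp}(P)$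 is finite.) *)

(* Defs.v *)
From mathcomp Require Import all_boot all_order all_algebra.
Set Implicit Arguments. Unset Strict Implicit. Unset Printing Implicit Defensive.
Import Order.TTheory GRing.Theory Num.Theory.
Local Open Scope ring_scope.

Section Defs.
Variable K : realFieldType.

Definition area (u v : K * K) : K := 2^-1 * (u.1 - v.1) * (u.2 + v.2).

Definition dang (u v : K * K) : K :=
  4^-1 * `|Num.sg u.1 - Num.sg v.1| * Num.sg (u.1 * v.2 - u.2 * v.1).

Definition toK (z : int * int) : K * K := (z.1%:~R, z.2%:~R).

Definition Area (p : nat -> int * int) (n : nat) : K :=
  \sum_(1 <= i < n.+1) area (toK (p i.-1)) (toK (p i)).

Definition subZ2 (a q : int * int) : int * int := (a.1 - q.1, a.2 - q.2).

Definition Dang (p : nat -> int * int) (n : nat) (q : int * int) : K :=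
  \sum_(1 <= i < n.+1) dang (toK (subZ2 (p i.-1) q)) (toK (subZ2 (p i) q)).
End Defs.

(* Main.v *)
Require Import Defs.
From mathcomp Require Import all_boot all_order all_algebra.
From mathcomp Require Import zify ring lra.
Import Order.TTheory GRing.Theory Num.Theory.
Local Open Scope ring_scope.

Definition T (M : nat) : seq int := [seq - (M%:Z) + i%:Z | i <- iota 0 (2 * M).+1].
Definition B (M : nat) : seq (int * int) := [seq (x, y) | x <- T M, y <- T M].
Definition inb (R x : int) : bool := ((- R : int) <= x) && (x <= R).

Section K.
Variable K : realFieldType.
Implicit Types u v : K * K.

Lemma dang_opp u v : dang (-v.1, -v.2) (-u.1, -u.2) = - dang u v.
Proof.
rewrite /dang /= !sgrN.
have -> : - v.1 * - u.2 - - v.2 * - u.1 = - (u.1 * v.2 - u.2 * v.1) by ring.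
rewrite sgrN opprK addrC; ring.
Qed.

Lemma dang_sg_eq u v : Num.sg u.1 = Num.sg v.1 -> dang u v = 0.
Proof. by move=> e; rewrite /dang e subrr normr0 mulr0 mul0r. Qed.

Lemma dang_pos u v : 0 < u.2 -> 0 < v.2 -> dang u v = - (Num.sg v.1 - Num.sg u.1) / 4.
Proof.
case: u v => [u1 u2] [v1 v2] /= hu hv; rewrite /dang /=.
set X := u1 * v2 - u2 * v1.
have hX : X = u1 * v2 - u2 * v1 by [].
case: (ltrgt0P u1) => h1; case: (ltrgt0P v1) => h2;
  rewrite ?(gtr0_sg h1) ?(ltr0_sg h1) ?(gtr0_sg h2) ?(ltr0_sg h2) ?h1 ?h2 ?sgr0;
  (try by rewrite !subrr normr0 !mulr0 mul0r oppr0 mul0r);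
  (first [ rewrite (@ltr0_sg _ X); last by rewrite hX; nra
         | rewrite (@gtr0_sg _ X); last by rewrite hX; nra ]);
  (first [ rewrite ger0_norm; last by lra | rewrite ler0_norm; last by lra ]);
  by field.
Qed.

Lemma dang_neg u v : u.2 < 0 -> v.2 < 0 -> dang u v = (Num.sg v.1 - Num.sg u.1) / 4.
Proof.
case: u v => [u1 u2] [v1 v2] /= hu hv.
have := @dang_pos (u1, - u2) (v1, - v2); rewrite /= !oppr_gt0 => /(_ hu hv).
rewrite /dang /=.
have -> : u1 * - v2 - - u2 * v1 = - (u1 * v2 - u2 * v1) by ring.
rewrite sgrN mulrN => e.
apply: oppr_inj; rewrite e; ring.
Qed.

Definition W (G : int -> K) (lo : int) (N : nat) : K := \sum_(i < N) G (lo + i%:Z).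

Lemma W_split G lo N d : W G lo (N + d) = W G lo N + W G (lo + N%:Z) d.
Proof.
rewrite /W big_split_ord /=; congr (_ + _); apply: eq_bigr => i _ //=.
by rewrite PoszD addrA.
Qed.

Lemma W_shift G lo N d :
  W G (lo + d%:Z) N - W G lo N = W G (lo + N%:Z) d - W G lo d.
Proof.
have e1 := W_split G lo N d. have e2 := W_split G lo d N.
rewrite addnC in e1. rewrite e1 in e2.
move: e2; lra.
Qed.

Lemma W_const G lo d c : (forall i : nat, (i < d)%N -> G (lo + i%:Z) = c) ->
  W G lo d = d%:R * c.
Proof.
move=> h; rewrite /W (eq_bigr (fun _ => c)); last by move=> i _; apply: h.
by rewrite sumr_const card_ord mulr_natl.
Qed.

Lemma W_step G lo N (e L U : int) (al be : K) :
  (forall t, t < L -> G t = al) -> (forall t, U <= t -> G t = be) ->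
  lo <= L -> lo + e <= L -> U <= lo + N%:Z -> U <= lo + e + N%:Z ->
  W G (lo + e) N - W G lo N = e%:~R * (be - al).
Proof.
move=> hL hU h1 h2 h3 h4.
case: e h2 h4 => d h2 h4.
- rewrite W_shift (W_const _ _ _ be); last by move=> i _; apply: hU; lia.
  rewrite (W_const _ _ _ al); last by move=> i hi; apply: hL; lia.
  rewrite -mulrBr; congr (_ * _).
set lo' := lo + Negz d.
have -> : lo = lo' + d.+1%:Z by rewrite /lo' NegzE; ring.
rewrite -opprB W_shift (W_const _ _ _ be); last by move=> i _; apply: hU; rewrite /lo' NegzE in h4 *; lia.
rewrite (W_const _ _ _ al); last by move=> i hi; apply: hL; rewrite /lo' NegzE in h2 *; lia.
rewrite NegzE intrN -mulrBr mulNr; congr (- (_ * _)).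
Qed.

Lemma W_rev G r lo N : W (fun c => G (r - c)) lo N.+1 = W G (r - lo - N%:Z) N.+1.
Proof.
rewrite /W (reindex_inj rev_ord_inj) /=; apply: eq_bigr => i _; congr G.
have := ltn_ord i; rewrite subSS; lia.
Qed.

Lemma W_ext G G' lo N : (forall t, G t = G' t) -> W G lo N = W G' lo N.
Proof. by move=> h; apply: eq_bigr => i _; apply: h. Qed.

Lemma W_opp G lo N : W (fun t => - G t) lo N = - W G lo N.
Proof. by rewrite /W sumrN. Qed.

Lemma W_add G G' lo N : W (fun t => G t + G' t) lo N = W G lo N + W G' lo N.
Proof. by rewrite /W big_split. Qed.

Lemma W_sub G G' lo N : W (fun t => G t - G' t) lo N = W G lo N - W G' lo N.
Proof. by rewrite /W sumrB. Qed.

Lemma W_scale k G lo N : W (fun t => k * G t) lo N = k * W G lo N.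
Proof. by rewrite /W mulr_sumr. Qed.

Lemma W_arg G k lo N : W (fun c => G (c + k)) lo N = W G (lo + k) N.
Proof. apply: eq_bigr => i _; congr G; ring. Qed.

Lemma sumT (f : int -> K) M : \sum_(x <- T M) f x = W f (- (M%:Z)) (2 * M).+1.
Proof.
rewrite big_map.
have -> : iota 0 (2 * M).+1 = index_iota 0 (2 * M).+1 by rewrite /index_iota subn0.
by rewrite big_mkord.
Qed.

Lemma sumB (F : int * int -> K) M : \sum_(q <- B M) F q =
  W (fun c => W (fun t => F (c, t)) (- (M%:Z)) (2 * M).+1) (- (M%:Z)) (2 * M).+1.
Proof.
rewrite big_allpairs sumT; apply: W_ext => c; exact: sumT.
Qed.

Definition Fe (a b q : int * int) : K := dang (toK K (subZ2 a q)) (toK K (subZ2 b q)).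
Definition sig (a b : int * int) (c : int) : K :=
  Num.sg ((b.1 - c)%:~R : K) - Num.sg ((a.1 - c)%:~R : K).

Lemma Fe_anti (a b : int * int) (c t : int) : Fe a b (a.1 + b.1 - c, t) = - Fe a b (c, a.2 + b.2 - t).
Proof.
rewrite /Fe -dang_opp /toK /subZ2 /=.
congr (dang (_, _) (_, _)); rewrite -intrN; congr (_%:~R); ring.
Qed.

Lemma Fe_below (a b : int * int) (c t : int) : t < a.2 -> t < b.2 -> Fe a b (c, t) = - sig a b c / 4.
Proof.
move=> ha hb; rewrite /Fe dang_pos /= ?ltr0z ?subr_gt0 //.
Qed.

Lemma Fe_above (a b : int * int) (c t : int) : a.2 < t -> b.2 < t -> Fe a b (c, t) = sig a b c / 4.
Proof.
move=> ha hb; rewrite /Fe dang_neg /= ?ltrz0 ?subr_lt0 //.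
Qed.

Lemma Fe_side (a b : int * int) (c t : int) : (c < a.1) && (c < b.1) || (a.1 < c) && (b.1 < c) -> Fe a b (c, t) = 0.
Proof.
move=> h; rewrite /Fe dang_sg_eq //= .
case/orP: h => /andP [h1 h2].
  by rewrite !gtr0_sg // ltr0z subr_gt0.
by rewrite !ltr0_sg // ltrz0 subr_lt0.
Qed.

Lemma edge (a b : int * int) (R : int) (M : nat) :
  inb R a.1 -> inb R a.2 -> inb R b.1 -> inb R b.2 -> 3 * R <= M%:Z ->
  \sum_(q <- B M) Fe a b q = area (toK K a) (toK K b).
Proof.
case: a b => [a1 a2] [b1 b2] /= /andP[ha1 ha1'] /andP[ha2 ha2'] /andP[hb1 hb1'] /andP[hb2 hb2'] hM.
rewrite sumB.
set N := (2 * M).+1.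
set col := fun c => W (fun t => Fe (a1, a2) (b1, b2) (c, t)) (- (M%:Z)) N.
set r := a1 + b1. set s := a2 + b2.
have h1 : W col (- (M%:Z) + r) N - W col (- (M%:Z)) N = r%:~R * (0 - 0).
  apply: (W_step _ _ _ _ (- R) (R + 1)); rewrite /N /r; try lia.
  - move=> t ht; rewrite /col /W big1 // => i _; apply: Fe_side; apply/orP; left; apply/andP; split => /=; lia.
  - move=> t ht; rewrite /col /W big1 // => i _; apply: Fe_side; apply/orP; right; apply/andP; split => /=; lia.
have h2 : W col (- (M%:Z) + r) N = W (fun c => col (r - c)) (- (M%:Z)) N.
  by rewrite /N W_rev; congr W; lia.
have h3 : forall c, col (r - c) = - W (fun t => Fe (a1, a2) (b1, b2) (c, t)) (- (M%:Z) + s) N.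
  move=> c; rewrite /col /r.
  rewrite (W_ext _ (fun t => - Fe (a1, a2) (b1, b2) (c, s - t))); last by move=> t; exact: Fe_anti.
  by rewrite W_opp /N (W_rev (fun t => Fe (a1, a2) (b1, b2) (c, t))); congr (- W _ _ _); lia.
have h4 : forall c, col c + col (r - c) = - (s%:~R * (sig (a1, a2) (b1, b2) c / 2)).
  move=> c; rewrite h3.
  have := @W_step (fun t => Fe (a1, a2) (b1, b2) (c, t)) (- (M%:Z)) N s (- R) (R + 1)
     (- sig (a1, a2) (b1, b2) c / 4) (sig (a1, a2) (b1, b2) c / 4).
  move=> /(_ _ _ _ _ _ _) e.
  rewrite -opprB /col e; first by congr (- (_ * _)); field.
  - by move=> t ht; apply: Fe_below => /=; lia.
  - by move=> t ht; apply: Fe_above => /=; lia.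
  1-4: rewrite /N /s; lia.
have h5 : 2 * W col (- (M%:Z)) N = - (s%:~R / 2) * W (sig (a1, a2) (b1, b2)) (- (M%:Z)) N.
  have -> : 2 * W col (- (M%:Z)) N = W col (- (M%:Z)) N + W col (- (M%:Z) + r) N.
    move: h1; rewrite subrr mulr0 => /eqP; rewrite subr_eq0 => /eqP ->; ring.
  rewrite h2 -W_add (W_ext _ _ _ _ h4) -W_scale; apply: W_ext => x; ring.
have h6 : W (sig (a1, a2) (b1, b2)) (- (M%:Z)) N = (a1 - b1)%:~R * (-1 - 1).
  set h := fun t : int => Num.sg (((- t)%:~R) : K).
  rewrite (W_ext _ (fun c => h (c + - b1) - h (c + - a1))); last first.
    by move=> x; rewrite /h /sig /= !opprD !opprK !(addrC (- x)).
  rewrite W_sub !W_arg.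
  have -> : - (M%:Z) + - b1 = (- (M%:Z) + - a1) + (a1 - b1) by ring.
  apply: (W_step _ _ _ _ 0 1); rewrite /N; try lia.
  - by move=> t ht; rewrite /h gtr0_sg // ltr0z; lia.
  - by move=> t ht; rewrite /h ltr0_sg // ltrz0; lia.
apply: (@mulfI K 2); first by rewrite pnatr_eq0.
rewrite h5 h6 /area /toK /= /s intrB intrD.
by field.
Qed.

End K.

Lemma sum_supp (K : realFieldType) (f : int * int -> K) S1 S2 : uniq S1 -> uniq S2 ->
  (forall q, q \notin S1 -> f q = 0) -> (forall q, q \notin S2 -> f q = 0) ->
  \sum_(q <- S1) f q = \sum_(q <- S2) f q.
Proof.
move=> u1 u2 h1 h2.
have e1 : \sum_(q <- S1 | q \in S2) f q = \sum_(q <- S1) f q.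
  rewrite big_mkcond. apply: eq_bigr => q _. case: ifP => hq. reflexivity.
  have := h2 q. rewrite hq. move=> ->; [reflexivity | exact: isT].
have e2 : \sum_(q <- S2 | q \in S1) f q = \sum_(q <- S2) f q.
  rewrite big_mkcond. apply: eq_bigr => q _. case: ifP => hq. reflexivity.
  have := h1 q. rewrite hq. move=> ->; [reflexivity | exact: isT].
have hp : perm_eq [seq q <- S1 | q \in S2] [seq q <- S2 | q \in S1].
  apply: uniq_perm. exact: filter_uniq. exact: filter_uniq.
  move=> q. rewrite !mem_filter. exact: andbC.
rewrite -e1 -e2 -big_filter -[RHS]big_filter.
exact: perm_big hp.
Qed.


Lemma uniqB M : uniq (B M).
Proof.
have uT : uniq (T M).
  rewrite map_inj_uniq ?iota_uniq // => i j /addrI [] //.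
apply: allpairs_uniq => // -[x y] [x' y'] _ _ /= [-> ->] //.
Qed.

Lemma memB M (x y : int) : inb (M%:Z) x -> inb (M%:Z) y -> (x, y) \in B M.
Proof.
have memT : forall z, inb (M%:Z) z -> z \in T M.
  move=> z /andP [h1 h2]; apply/mapP; exists (absz (z + M%:Z)).
    rewrite mem_iota; lia.
  lia.
move=> hx hy; apply/allpairsP; exists (x, y) => /=; split => //; exact: memT.
Qed.

Theorem lemma2p7 (K : realFieldType) (n : nat) (p : nat -> int * int) :
  (1 <= n)%N -> p n = p 0%N ->
  (exists S : seq (int * int), forall q, q \notin S -> Dang K p n q = 0) /\
  (forall S : seq (int * int), uniq S ->
     (forall q, q \notin S -> Dang K p n q = 0) ->
     Area K p n = \sum_(q <- S) Dang K p n q).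
Proof.
move=> n1 hpn.
set Rn := \max_(i < n.+1) maxn (absz (p i).1) (absz (p i).2).
have hb : forall i, (i <= n)%N -> inb Rn%:Z (p i).1 && inb Rn%:Z (p i).2.
  move=> i hi; have := @leq_bigmax _ (fun j : 'I_n.+1 => maxn (absz (p j).1) (absz (p j).2)) (Ordinal (hi : (i < n.+1)%N)).
  rewrite -/Rn /= /inb => h; lia.
have hv : forall i, (1 <= i < n.+1)%N ->
    [&& inb Rn%:Z (p i.-1).1, inb Rn%:Z (p i.-1).2, inb Rn%:Z (p i).1 & inb Rn%:Z (p i).2].
  move=> i /andP [i1 i2].
  have /andP [h1 h2] := hb i.-1 (leq_trans (leq_pred i) i2).
  have /andP [h3 h4] := hb i i2.
  by rewrite h1 h2 h3 h4.
have eD : forall q, Dang K p n q = \sum_(1 <= i < n.+1) Fe K (p i.-1) (p i) q by [].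
have supp : forall q, q \notin B (3 * Rn)%N -> Dang K p n q = 0.
  case=> c t hq; rewrite eD.
  case: (boolP (inb (3 * Rn)%N c && inb (3 * Rn)%N t)) => hin.
    by move: hq; case/andP: hin => h1 h2; rewrite memB.
  have : [|| (c < - ((3 * Rn)%N%:Z)), ((3 * Rn)%N%:Z < c), (t < - ((3 * Rn)%N%:Z)) | ((3 * Rn)%N%:Z < t)].
    move: hin; rewrite /inb; lia.
  set g := fun i => Num.sg ((((p i).1 - c)%:~R) : K).
  case/or4P => ht.
  - apply: big1_seq => i /andP [_]; rewrite mem_index_iota => hi.
    have := hv i hi; case/and4P => /andP [? ?] /andP [? ?] /andP [? ?] /andP [? ?].
    apply: Fe_side; apply/orP; left; apply/andP; split; lia.
  - apply: big1_seq => i /andP [_]; rewrite mem_index_iota => hi.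
    have := hv i hi; case/and4P => /andP [? ?] /andP [? ?] /andP [? ?] /andP [? ?].
    apply: Fe_side; apply/orP; right; apply/andP; split; lia.
  - rewrite (@eq_big_nat _ _ _ 1 n.+1 _ (fun i => - (g i - g i.-1) / 4)); last first.
      move=> i hi; have := hv i hi; case/and4P => /andP [? ?] /andP [? ?] /andP [? ?] /andP [? ?].
      rewrite Fe_below //=; lia.
    rewrite big_add1 /= -mulr_suml sumrN telescope_sumr // /g hpn subrr oppr0 mul0r.
    reflexivity.
  - rewrite (@eq_big_nat _ _ _ 1 n.+1 _ (fun i => (g i - g i.-1) / 4)); last first.
      move=> i hi; have := hv i hi; case/and4P => /andP [? ?] /andP [? ?] /andP [? ?] /andP [? ?].
      rewrite Fe_above //=; lia.
    rewrite big_add1 /= -mulr_suml telescope_sumr // /g hpn subrr mul0r.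
    reflexivity.
have hA : Area K p n = \sum_(q <- B (3 * Rn)%N) Dang K p n q.
  rewrite /Area (@eq_big_nat _ _ _ 1 n.+1 _ (fun i => \sum_(q <- B (3 * Rn)%N) Fe K (p i.-1) (p i) q)).
    rewrite exchange_big; apply: eq_bigr => q _; rewrite eD; reflexivity.
  move=> i hi; have := hv i hi; case/and4P => h1 h2 h3 h4.
  symmetry; apply: (@edge K _ _ Rn%:Z) => //; lia.
split; first by exists (B (3 * Rn)%N).
move=> S uS hS; rewrite hA; apply: sum_supp => //; exact: uniqB.
Qed.
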